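(* Let $G$ be an abelian group and $B=\bigoplus_{i\in G}B_i$ a $G$-graded integral domain containing $\mathbb{Q}$. Suppose $d\in G$ has infinite order and $D:B^{(d)}\to B^{(d)}$ is a nonzero homogeneous locally nilpotent derivation with $\ker D\not\subseteq B_0$. Then some element of $D(B^{(d)})\cap\ker(D)$ is a cylindrical element of $B$.
   Context: $B^{(d)}=\bigoplus_{i\in\langle d\rangle}B_i$, where $\langle d\rangle$ is the subgroup generated by $d$. A derivation is homogeneous if it shifts degrees by a fixed element of the group; locally nilpotent if every element is killed by some power. For nonzero homogeneous $f$, $B_{(f)}$ is the degree-$0$ subring of $B_f=S^{-1}B$, $S=\{1,f,f^2,\dots\}$. A ring is a polynomial ring in one variable if it is a polynomial ring in one variable over some subring (zero ring counts). For a $G$-graded ring $B$, an element $f$ is cylindrical if it is nonzero and homogeneous, $\deg(f)\in G$ has infinite order, and $B_{(f)}$ is a polynomial ring in one variable. *)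

(* Defs.v *)
From HB Require Import structures.
From mathcomp Require Import all_boot all_order all_algebra.
From mathcomp Require Import fraction.
Set Implicit Arguments. Unset Strict Implicit. Unset Printing Implicit Defensive.
Import Order.TTheory GRing.Theory Num.Theory.
Local Open Scope ring_scope.

Section Graded.
Variables (G : zmodType) (B : idomainType).

Definition contains_Q : Prop := forall n : nat, (0 < n)%N -> (n%:R : B) \is a GRing.unit.

Definition is_grading (Bi : G -> pred B) : Prop :=
  [/\ (forall i, 0 \in Bi i) /\
      (forall i x y, x \in Bi i -> y \in Bi i -> x - y \in Bi i),
      1 \in Bi 0,
      (forall i j x y, x \in Bi i -> y \in Bi j -> x * y \in Bi (i + j)),
      (forall x : B, exists (s : seq G) (c : G -> B),
          uniq s /\ (forall i, c i \in Bi i) /\ x = \sum_(i <- s) c i)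
    &
      (forall (s : seq G) (c : G -> B), uniq s -> (forall i, c i \in Bi i) ->
          \sum_(i <- s) c i = 0 -> forall i, i \in s -> c i = 0)].

Definition in_cyclic (d i : G) : Prop := exists z : int, i = d *~ z.

Definition infinite_order (d : G) : Prop := forall n : nat, (0 < n)%N -> d *+ n != 0.

(* B^{(d)} = (+)_{i in <d>} B_i, as a predicate on B *)
Definition Veronese (Bi : G -> pred B) (d : G) (x : B) : Prop :=
  exists (s : seq G) (c : G -> B),
    (forall i, i \in s -> in_cyclic d i) /\ (forall i, c i \in Bi i) /\
    x = \sum_(i <- s) c i.

Definition homogeneous_elt (Bi : G -> pred B) (x : B) : Prop := exists i, x \in Bi i.

(* D : B^{(d)} -> B^{(d)} (modelled as a function B -> B, only its values on
   B^{(d)} matter) is a derivation of B^{(d)} *)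
Definition derivation_on (S : B -> Prop) (D : B -> B) : Prop :=
  [/\ (forall x, S x -> S (D x)),
      (forall x y, S x -> S y -> D (x + y) = D x + D y)
    & (forall x y, S x -> S y -> D (x * y) = x * D y + D x * y)].

Definition homogeneous_der (Bi : G -> pred B) (d : G) (D : B -> B) : Prop :=
  exists e : G, forall i x, in_cyclic d i -> x \in Bi i -> D x \in Bi (i + e).

Definition locally_nilpotent_on (S : B -> Prop) (D : B -> B) : Prop :=
  forall x, S x -> exists n : nat, iter n D x = 0.

Local Notation F := {fraction B}.
Local Notation toF := (@FracField.tofrac B).

(* B_(f) = degree-0 part of B_f, realised inside Frac(B) (B is a domain, so
   B_f embeds in Frac(B)): elements b / f^n with b in B_{n deg f}. *)
Definition deg0_loc (Bi : G -> pred B) (f : B) (i : G) (y : F) : Prop :=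
  exists (n : nat) (b : B), b \in Bi (i *+ n) /\ y = toF b / (toF f) ^+ n.

Definition poly_ring_one_var (R : F -> Prop) : Prop :=
  exists (A : F -> Prop) (t : F),
    [/\ (forall a, A a -> R a) /\ A 0 /\ A 1,
        (forall a b, A a -> A b -> A (a - b)),
        (forall a b, A a -> A b -> A (a * b)) /\ R t,
        (forall y, R y <-> exists p : {poly F},
            (forall k, A p`_k) /\ y = p.[t])
      & (forall p : {poly F}, (forall k, A p`_k) -> p.[t] = 0 -> p = 0)].

Definition cylindrical (Bi : G -> pred B) (f : B) : Prop :=
  f != 0 /\ exists i : G,
    [/\ f \in Bi i, infinite_order i & poly_ring_one_var (deg0_loc Bi f i)].

End Graded.

(* Main.v *)
Require Import Defs.
From HB Require Import structures.
From mathcomp Require Import all_boot all_order all_algebra.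
From mathcomp Require Import fraction.
From mathcomp Require Import ring lra zify.
From Stdlib Require Import Classical.
Set Implicit Arguments. Unset Strict Implicit. Unset Printing Implicit Defensive.
Import Order.TTheory GRing.Theory Num.Theory.
Local Open Scope ring_scope.

Section GF.
Variable K : fieldType.
Lemma G1 (c x n : K) : x != 0 -> n != 0 -> c / (x * n) = c * n^-1 / x.
Proof. by move=> hx hn; field; rewrite hx hn. Qed.
Lemma G2 (a1 a2 x1 x2 : K) : x1 != 0 -> x2 != 0 -> a1 / x1 + a2 / x2 = (a1 * x2 + a2 * x1) / (x1 * x2).
Proof. by move=> h1 h2; field; rewrite ?h1 ?h2. Qed.
Lemma G3 (a1 a2 x1 x2 : K) : a1 / x1 * (a2 / x2) = a1 * a2 / (x1 * x2).
Proof. by rewrite invfM; ring. Qed.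
Lemma G4 (a1 a2 x1 x2 : K) : x1 != 0 -> x2 != 0 -> a1 / x1 - a2 / x2 = (a1 * x2 - a2 * x1) / (x1 * x2).
Proof. by move=> h1 h2; field; rewrite ?h1 ?h2. Qed.
Lemma G5 (a x y : K) : y != 0 -> a / x = a * y / (x * y).
Proof. by move=> hy; rewrite invfM [x^-1 * _]mulrC mulrA mulfK. Qed.
Lemma G6 (c R X Y Z y : K) : y != 0 -> Z != 0 -> X * Y = Z * Z -> c * R / y = c * Y / (y * Z) * (R * X / Z).
Proof.
move=> hy hZ hXY.
have -> : c * Y / (y * Z) * (R * X / Z) = c * R * (X * Y) / (y * Z * Z) by field; rewrite hy hZ.
by rewrite hXY; field; rewrite hy hZ.
Qed.
Lemma G7 (a x y : K) : y != 0 -> a / y * (x * y) = a * x.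
Proof. by move=> h1; field. Qed.
Lemma G8 (q R X Z W : K) : Z != 0 -> q * X * W * R = q * (R * X / Z) * (Z * W).
Proof. by move=> h1; field. Qed.
End GF.

Lemma ex_minP (P : nat -> Prop) : (exists n, (0 < n)%N /\ P n) ->
  exists n, [/\ (0 < n)%N, P n & forall k, (0 < k < n)%N -> ~ P k].
Proof.
move=> [n [n0 Pn]].
elim/ltn_ind: n n0 Pn => n IH n0 Pn.
case: (classic (exists k, (0 < k < n)%N /\ P k)) => [[k [/andP[k0 kn] Pk]]|H].
  exact: (IH k kn k0 Pk).
exists n; split => // k kn Pk; apply: H; by exists k.
Qed.

Section Main.
Variables (G : zmodType) (B : idomainType) (Bi : G -> pred B) (d : G) (D : B -> B).
Hypothesis hgr : is_grading Bi.
Hypothesis hQ : contains_Q B.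
Hypothesis hinf : infinite_order d.
Hypothesis hder : derivation_on (Veronese Bi d) D.

Lemma Bi0 i : 0 \in Bi i. Proof. by case: hgr => [[]]. Qed.
Lemma BiB i x y : x \in Bi i -> y \in Bi i -> x - y \in Bi i.
Proof. by case: hgr => [[_ H]] *; apply: H. Qed.
Lemma BiN i x : x \in Bi i -> - x \in Bi i.
Proof. by move=> h; rewrite -sub0r; apply: BiB => //; apply: Bi0. Qed.
Lemma BiD i x y : x \in Bi i -> y \in Bi i -> x + y \in Bi i.
Proof. by move=> hx hy; rewrite -[y]opprK; apply: BiB => //; apply: BiN. Qed.
Lemma BiMn i x n : x \in Bi i -> x *+ n \in Bi i.
Proof. by move=> hx; elim: n => [|n IH]; rewrite ?mulr0n ?Bi0 // mulrS BiD. Qed.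
Lemma Bi1 : 1 \in Bi 0. Proof. by case: hgr. Qed.
Lemma BiM i j x y : x \in Bi i -> y \in Bi j -> x * y \in Bi (i + j).
Proof. by case: hgr => _ _ H _ _; apply: H. Qed.
Lemma Bi_sum (I : Type) (s : seq I) (P : pred I) (F : I -> B) j :
  (forall k, P k -> F k \in Bi j) -> \sum_(k <- s | P k) F k \in Bi j.
Proof. by move=> h; apply: (big_ind (fun x => x \in Bi j)) => //; [apply: Bi0|apply: BiD]. Qed.

Lemma natr_unit n : (0 < n)%N -> (n%:R : B) \is a GRing.unit.
Proof. exact: hQ. Qed.
Lemma natr_neq0 n : (0 < n)%N -> (n%:R : B) != 0.
Proof. by move=> /natr_unit u; apply/eqP => e; rewrite e unitr0 in u. Qed.
Lemma mulrn_eq0' (x : B) n : (0 < n)%N -> x *+ n = 0 -> x = 0.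
Proof. by move=> n0 /eqP; rewrite -mulr_natr mulf_eq0 (negbTE (natr_neq0 n0)) orbF => /eqP. Qed.

Lemma sum_count (s : seq G) (F : G -> B) :
  \sum_(i <- s) F i = \sum_(i <- undup s) F i *+ count_mem i s.
Proof.
rewrite -big_undup_iterop_count; apply: eq_bigr => i _.
case: (count_mem i s) => [|n] //=; elim: n => [|n IH] //=.
Qed.

Lemma L0 (s : seq G) (F : G -> B) : (forall i, i \in s -> F i \in Bi i) ->
  \sum_(i <- s) F i = 0 -> forall i, i \in s -> F i = 0.
Proof.
move=> hF hs i iS.
pose c j := if j \in s then F j *+ count_mem j s else 0.
case: hgr => _ _ _ _ Hdir.
have := Hdir (undup s) c (undup_uniq s).
have hc : forall j, c j \in Bi j.
  by move=> j; rewrite /c; case: ifP => h; [apply: BiMn; apply: hF|apply: Bi0].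
move=> /(_ hc); rewrite (eq_big_seq (fun j => F j *+ count_mem j s)); last first.
  by move=> j; rewrite mem_undup /c => ->.
rewrite -sum_count => /(_ hs i); rewrite mem_undup /c iS => /(_ isT).
apply: mulrn_eq0'; by rewrite -has_count has_pred1.
Qed.

Lemma L0h (s : seq G) (c : G -> B) x j : (forall i, i \in s -> c i \in Bi i) ->
  x = \sum_(i <- s) c i -> x \in Bi j -> forall i, i \in s -> i != j -> c i = 0.
Proof.
move=> hc hx xj.
pose xj' := \sum_(i <- s | i == j) c i.
have hxj' : xj' \in Bi j.
  rewrite /xj' big_seq_cond; apply: Bi_sum => k /andP[ks /eqP <-]; exact: hc.
pose F k := if k == j then - (x - xj') else c k.
have hF : forall k, k \in j :: filter (predC1 j) s -> F k \in Bi k.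
  move=> k; rewrite inE mem_filter /F; case: (k =P j) => [->|nkj] h.
    by apply: BiN; apply: BiB.
  by apply: hc; case/orP: h => [/eqP//|/andP[]].
have hs : \sum_(k <- j :: filter (predC1 j) s) F k = 0.
  rewrite big_cons /F eqxx big_filter.
  rewrite (eq_bigr c); last by move=> k /= /negbTE ->.
  by rewrite hx (bigID (fun i => i == j)) /= /xj' addrAC subrr add0r addNr.
move=> i iS ij; have := L0 hF hs; move=> /(_ i); rewrite /F (negbTE ij).
by apply; rewrite inE mem_filter /= ij iS orbT.
Qed.

Lemma L1 x j : Veronese Bi d x -> x \in Bi j -> x != 0 -> in_cyclic d j.
Proof.
move=> [s [c [hs [hc hx]]]] xj x0; apply: NNPP => nj.
have := L0h (fun i _ => hc i) hx xj => h.
move/eqP: x0; apply; rewrite hx big_seq big1 // => i iS; apply: h => //.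
by apply/eqP => e; apply: nj; rewrite -e; apply: hs.
Qed.

Definition Hd z := Bi (d *~ z).

Lemma HdS z x : x \in Hd z -> Veronese Bi d x.
Proof.
move=> hx; exists [:: d *~ z], (fun j => if j == d *~ z then x else 0); split.
  by move=> i; rewrite inE => /eqP ->; exists z.
split; first by move=> i; case: eqP => [->|_] //; apply: Bi0.
by rewrite big_seq1 eqxx.
Qed.

Lemma HdM z1 z2 x y : x \in Hd z1 -> y \in Hd z2 -> x * y \in Hd (z1 + z2).
Proof. by rewrite /Hd mulrzDr; apply: BiM. Qed.
Lemma Hd1 : 1 \in Hd 0. Proof. exact: Bi1. Qed.
Lemma HdX z x n : x \in Hd z -> x ^+ n \in Hd (z * n%:Z).
Proof.
move=> hx; elim: n => [|n IH]; first by rewrite expr0 mulr0; apply: Hd1.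
by rewrite exprS -addn1 PoszD mulrDr mulr1 addrC; apply: HdM.
Qed.
Lemma Hd_eq z1 z2 x : z1 = z2 -> x \in Hd z1 -> x \in Hd z2.
Proof. by move=> ->. Qed.

Lemma dz_inj z1 z2 : d *~ z1 = d *~ z2 -> z1 = z2.
Proof.
move=> /eqP; rewrite -subr_eq0 -mulrzBr => /eqP h; apply/eqP; rewrite -subr_eq0.
apply/negPn/negP => nz.
case: (ltrgtP (z1 - z2) 0) => hz; last by rewrite hz eqxx in nz.
- have := hinf (n := `|z1 - z2|%N); rewrite absz_gt0 nz => /(_ isT).
  by rewrite -mulrz_nat natr_absz ltr0_norm // intz mulrNz h oppr0 eqxx.
- have := hinf (n := `|z1 - z2|%N); rewrite absz_gt0 nz => /(_ isT).
  by rewrite -mulrz_nat natr_absz gtr0_norm // intz h eqxx.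
Qed.

Variable ez : int.
Hypothesis hhom : forall z x, x \in Hd z -> D x \in Hd (z + ez).

Lemma DD z1 z2 x y : x \in Hd z1 -> y \in Hd z2 -> D (x + y) = D x + D y.
Proof. by case: hder => _ H _ hx hy; apply: H; [apply: HdS hx|apply: HdS hy]. Qed.
Lemma DM z1 z2 x y : x \in Hd z1 -> y \in Hd z2 -> D (x * y) = x * D y + D x * y.
Proof. by case: hder => _ _ H hx hy; apply: H; [apply: HdS hx|apply: HdS hy]. Qed.
Lemma D0 : D 0 = 0.
Proof.
have h0 : (0 : B) \in Hd 0 by apply: Bi0.
move: (DD h0 h0); rewrite addr0 => h; apply: (addrI (D 0)); by rewrite addr0 -h.
Qed.
Lemma D1 : D 1 = 0.
Proof.
move: (DM Hd1 Hd1); rewrite !mulr1 mul1r => h; apply: (addrI (D 1)); by rewrite addr0 -h.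
Qed.
Lemma DN z x : x \in Hd z -> D (- x) = - D x.
Proof.
move=> hx; have hn : - x \in Hd z by apply: BiN.
by have := DD hx hn; rewrite addrN D0 => /eqP; rewrite eq_sym addr_eq0 => /eqP ->; rewrite opprK.
Qed.
Lemma DB z1 z2 x y : x \in Hd z1 -> y \in Hd z2 -> D (x - y) = D x - D y.
Proof. by move=> hx hy; rewrite (DD hx (BiN hy)) (DN hy). Qed.
Lemma DMn z x n : x \in Hd z -> D (x *+ n) = D x *+ n.
Proof.
move=> hx; elim: n => [|n IH]; first by rewrite !mulr0n D0.
by rewrite !mulrS (DD hx (BiMn n hx)) IH.
Qed.
Lemma Dsum z (I : Type) (s : seq I) (P : pred I) (F : I -> B) :
  (forall k, P k -> F k \in Hd z) -> D (\sum_(k <- s | P k) F k) = \sum_(k <- s | P k) D (F k).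
Proof.
move=> hF; elim: s => [|a s IH]; first by rewrite !big_nil D0.
rewrite !big_cons; case: ifP => // Pa.
have hs : \sum_(k <- s | P k) F k \in Hd z by apply: Bi_sum.
by rewrite (DD (hF a Pa) hs) IH.
Qed.

Definition Kh z x := x \in Hd z /\ D x = 0.

Lemma KhM z1 z2 x y : Kh z1 x -> Kh z2 y -> Kh (z1 + z2) (x * y).
Proof. by move=> [hx dx] [hy dy]; split; [apply: HdM|rewrite (DM hx hy) dx dy mulr0 mul0r addr0]. Qed.
Lemma Kh1 : Kh 0 1. Proof. by split; [apply: Hd1|apply: D1]. Qed.
Lemma Kh0 z : Kh z 0. Proof. by split; [apply: Bi0|apply: D0]. Qed.
Lemma KhB z x y : Kh z x -> Kh z y -> Kh z (x - y).
Proof. by move=> [hx dx] [hy dy]; split; [apply: BiB|rewrite (DB hx hy) dx dy subr0]. Qed.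
Lemma KhD z x y : Kh z x -> Kh z y -> Kh z (x + y).
Proof. by move=> [hx dx] [hy dy]; split; [apply: BiD|rewrite (DD hx hy) dx dy addr0]. Qed.
Lemma KhMn z x n : Kh z x -> Kh z (x *+ n).
Proof. by move=> [hx dx]; split; [apply: BiMn|rewrite (DMn n hx) dx mul0rn]. Qed.
Lemma KhX z x n : Kh z x -> Kh (z * n%:Z) (x ^+ n).
Proof.
move=> hx; elim: n => [|n IH]; first by rewrite expr0 mulr0; apply: Kh1.
by rewrite exprS -addn1 PoszD mulrDr mulr1 addrC; apply: KhM.
Qed.
Lemma Kh_sum z (I : Type) (s : seq I) (P : pred I) (F : I -> B) :
  (forall k, P k -> Kh z (F k)) -> Kh z (\sum_(k <- s | P k) F k).
Proof. by move=> h; apply: (big_ind (Kh z)) => //; [apply: Kh0|apply: KhD]. Qed.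
Lemma Kh_eq z1 z2 x : z1 = z2 -> Kh z1 x -> Kh z2 x.
Proof. by move=> ->. Qed.
Lemma D_Kl zf f z x : Kh zf f -> x \in Hd z -> D (f * x) = f * D x.
Proof. by move=> [hf df] hx; rewrite (DM hf hx) df mul0r addr0. Qed.

Variables (r : B) (rz : int).
Hypothesis hr : r \in Hd rz.
Hypothesis hf : D (D r) = 0.
Hypothesis hf0 : D r != 0.
Let f := D r.
Let dz := rz + ez.
Lemma Khf : Kh dz f.
Proof. by split => //; apply: hhom. Qed.

Definition HomPoly g (P : {poly B}) := forall k : nat, Kh (g - rz * k%:Z) P`_k.

Lemma horner_hom g P : HomPoly g P -> P.[r] \in Hd g.
Proof.
move=> hP; rewrite horner_coef; apply: Bi_sum => k _.
apply: (@Hd_eq (g - rz * k%:Z + rz * k%:Z)); first by rewrite subrK.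
by apply: HdM; [case: (hP k)|apply: HdX].
Qed.

Lemma HomPoly_eq g1 g2 P : g1 = g2 -> HomPoly g1 P -> HomPoly g2 P.
Proof. by move=> ->. Qed.

Lemma D_horner P : forall g, HomPoly g P -> D (P.[r]) = f * (P^`()).[r].
Proof.
elim/poly_ind: P => [|Q c IH] g hP; first by rewrite deriv0 !horner0 D0 mulr0.
have hQp : HomPoly (g - rz) Q.
  move=> k; have := hP k.+1; rewrite coefD coefMX coefC /= addr0.
  by apply: Kh_eq; rewrite -addn1 PoszD; ring.
have hc : Kh g c.
  by have := hP 0%N; rewrite coefD coefMX coefC /= add0r mulr0 subr0.
have hQr := horner_hom hQp.
have hQr' : Q.[r] * r \in Hd g.
  by apply: (@Hd_eq (g - rz + rz)); [rewrite subrK|apply: HdM].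
rewrite hornerMXaddC (DD hQr' (proj1 hc)) (DM hQr hr) (IH _ hQp) (proj2 hc).
rewrite derivMXaddC hornerD hornerMX /f; ring.
Qed.

Lemma HomPoly_deriv g P : HomPoly g P -> HomPoly (g - rz) P^`().
Proof.
move=> hP k; rewrite coef_deriv; apply: KhMn; have := hP k.+1.
by apply: Kh_eq; rewrite -addn1 PoszD; ring.
Qed.

Lemma transc : forall P g, HomPoly g P -> P.[r] = 0 -> P = 0.
Proof.
suff H : forall n (P : {poly B}) g, (size P <= n)%N -> HomPoly g P -> P.[r] = 0 -> P = 0.
  by move=> P g; apply: (H (size P)).
elim=> [|n IH] P g.
  by rewrite leqn0 size_poly_eq0 => /eqP.
move=> hs hP hr0.
have hd : P^`() = 0.
  have := D_horner hP; rewrite hr0 D0 => /esym/eqP; rewrite mulf_eq0 (negbTE hf0) /= => /eqP h.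
  apply: (IH _ _ _ (HomPoly_deriv hP) h).
  case: (eqVneq P 0) => [->|nP]; first by rewrite deriv0 size_poly0.
  by rewrite -ltnS; apply: leq_trans hs; apply: lt_size_deriv.
have hPC : P = (P`_0)%:P.
  apply/polyP => k; rewrite coefC; case: k => [|k] //=.
  by have := coef_deriv P k; rewrite hd coef0 => /esym; apply: mulrn_eq0'.
by move: hr0; rewrite hPC hornerC => ->.
Qed.

Lemma KhfX L : Kh (dz * L%:Z) (f ^+ L).
Proof. exact: KhX Khf. Qed.

Lemma expand q : forall b bz, b \in Hd bz -> iter q D b = 0 ->
  exists N L P, [/\ (0 < N)%N, HomPoly (bz + dz * L%:Z) P & (f ^+ L * b) *+ N = P.[r]].
Proof.
elim: q => [|q IH] b bz hb /=.
  move=> ->; exists 1%N, 0%N, 0; split => //; last by rewrite mulr0 mul0rn horner0.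
  by move=> k; rewrite coef0; apply: Kh0.
move=> hq; have {hq} hq : iter q D (D b) = 0 by rewrite -iterSr.
have [N [L [P [N0 hP hNP]]]] := IH _ _ (hhom hb) hq.
pose M := (size P)`!.
pose Q := \poly_(k < (size P).+1) (if k is k'.+1 then P`_k' *+ (M %/ k) else 0).
have hQ1 : HomPoly (bz + dz * (L.+1)%:Z) Q.
  move=> [|k]; rewrite coef_poly.
    by case: (_ < _)%N; apply: Kh0.
  case: (_ < _)%N; last by apply: Kh0.
  apply: KhMn; have := hP k; apply: Kh_eq; rewrite /dz -addn1 !PoszD; ring.
have hQd : Q^`() = P *+ M.
  apply/polyP => k; rewrite coef_deriv coefMn coef_poly ltnS.
  case: ltnP => hk; last by rewrite (nth_default _ hk) !mul0rn.
  rewrite -mulrnA divnK //; apply: dvdn_fact; by rewrite ltnS.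
have hfb : f ^+ L.+1 * b \in Hd (dz * (L.+1)%:Z + bz).
  by apply: HdM => //; case: (KhfX L.+1).
pose X := (f ^+ L.+1 * b) *+ (N * M) - Q.[r].
have hQr : Q.[r] \in Hd (bz + dz * (L.+1)%:Z) := horner_hom hQ1.
have hX : Kh (bz + dz * (L.+1)%:Z) X.
  split; first by apply: BiB => //; rewrite addrC; apply: BiMn.
  rewrite /X (DB (BiMn _ hfb) hQr) (DMn _ hfb) (D_Kl (KhfX L.+1) hb).
  rewrite (D_horner hQ1) hQd hornerMn -hNP exprS.
  by rewrite mulrnA !mulrnAr !mulrA subrr.
exists (N * M)%N, L.+1, (Q + X%:P); split.
- by rewrite muln_gt0 N0 fact_gt0.
- move=> [|k]; rewrite coefD coefC /=.
    by rewrite mulr0 subr0; have := hQ1 0%N; rewrite coef_poly /= add0r.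
  by rewrite addr0; apply: hQ1.
- by rewrite hornerD hornerC /X addrC subrK.
Qed.

Lemma Ninv_hom N : (0 < N)%N -> exists Ni, Ni \in Hd 0 /\ N%:R * Ni = 1.
Proof.
move=> N0; exists (N%:R)^-1; split; last by rewrite mulrV // natr_unit.
case: hgr => _ _ _ Hdec _.
have [s [c [_ [hc he]]]] := Hdec (N%:R)^-1.
have h1 : (N%:R * (N%:R)^-1 : B) \in Bi 0 by rewrite mulrV ?natr_unit //; apply: Bi1.
have he' : N%:R * (N%:R)^-1 = \sum_(i <- s) (N%:R * c i) :> B by rewrite he mulr_sumr.
have hc' : forall i, i \in s -> N%:R * c i \in Bi i.
  by move=> i _; have := BiM (BiMn N Bi1) (hc i); rewrite add0r.
have := L0h hc' he' h1 => hz.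
rewrite /Hd mulr0z he big_seq; apply: Bi_sum => i iS.
case: (eqVneq i 0) => [->|ni]; first exact: hc.
have /eqP := hz i iS ni; rewrite mulf_eq0 (negbTE (natr_neq0 N0)) /= => /eqP ->.
exact: Bi0.
Qed.

Local Notation F := {fraction B}.
Local Notation toF := (@FracField.tofrac B).

Lemma toF_neq0 x : x != 0 -> toF x != 0.
Proof. by rewrite tofrac_eq0. Qed.
Lemma f_neq0 : f != 0. Proof. exact: hf0. Qed.
Lemma den_neq0 L N : (0 < N)%N -> f ^+ L *+ N != 0.
Proof.
move=> N0; rewrite -mulr_natr mulf_eq0 negb_or expf_neq0 ?f_neq0 //.
exact: natr_neq0.
Qed.
Lemma toF_nat N : toF (N%:R) = N%:R.
Proof. exact: rmorph_nat. Qed.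
Lemma natF_neq0 N : (0 < N)%N -> (N%:R : F) != 0.
Proof. by move=> N0; rewrite -toF_nat toF_neq0 // natr_neq0. Qed.

Definition Rr (y : F) := deg0_loc Bi f (d *~ dz) y.
Lemma RrE y : Rr y <-> exists n b, b \in Hd (dz * n%:Z) /\ y = toF b / (toF f) ^+ n.
Proof.
have dzn n : d *~ (dz * n%:Z) = d *~ dz *+ n by rewrite mulrzA.
by split => [[n [b [hb e]]]|[n [b [hb e]]]]; exists n, b; rewrite /Hd dzn in hb *.
Qed.

Definition Aa (y : F) := exists c L N,
  [/\ (0 < N)%N, Kh (dz * L%:Z) c & y = toF c / toF (f ^+ L *+ N)].

Lemma Aa_Rr y : Aa y -> Rr y.
Proof.
move=> [c [L [N [N0 hc ->]]]]; have [Ni [hNi eNi]] := Ninv_hom N0.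
apply/RrE; exists L, (c * Ni); split.
  by apply: (@Hd_eq (dz * L%:Z + 0)); [rewrite addr0|apply: HdM => //; case: hc].
have eF : toF Ni = (N%:R)^-1.
  apply: (@mulfI _ (N%:R)); first exact: natF_neq0.
  by rewrite divff ?natF_neq0 // -toF_nat -tofracM eNi tofrac1.
rewrite tofracM eF tofracMn tofracXn -(mulr_natr (toF f ^+ L)).
apply: G1; [apply: expf_neq0; exact: toF_neq0 f_neq0|exact: natF_neq0].
Qed.

Lemma fF_neq0 : toF f != 0. Proof. exact: toF_neq0 f_neq0. Qed.
Lemma Hdf L : f ^+ L \in Hd (dz * L%:Z). Proof. by case: (KhfX L). Qed.

Lemma Rr_add y1 y2 : Rr y1 -> Rr y2 -> Rr (y1 + y2).
Proof.
move=> /RrE [n1 [b1 [h1 ->]]] /RrE [n2 [b2 [h2 ->]]]; apply/RrE.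
exists (n1 + n2)%N, (b1 * f ^+ n2 + b2 * f ^+ n1); split.
  apply: BiD.
    by apply: (@Hd_eq (dz * n1%:Z + dz * n2%:Z)); [rewrite PoszD; ring|apply: HdM => //; apply: Hdf].
  by apply: (@Hd_eq (dz * n2%:Z + dz * n1%:Z)); [rewrite PoszD; ring|apply: HdM => //; apply: Hdf].
rewrite tofracD !tofracM !tofracXn exprD; apply: G2; apply: expf_neq0; exact: fF_neq0.
Qed.

Lemma Rr_mul y1 y2 : Rr y1 -> Rr y2 -> Rr (y1 * y2).
Proof.
move=> /RrE [n1 [b1 [h1 ->]]] /RrE [n2 [b2 [h2 ->]]]; apply/RrE.
exists (n1 + n2)%N, (b1 * b2); split.
  by apply: (@Hd_eq (dz * n1%:Z + dz * n2%:Z)); [rewrite PoszD; ring|apply: HdM].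
rewrite tofracM exprD; exact: G3.
Qed.

Lemma Rr_0 : Rr 0.
Proof. by apply/RrE; exists 0%N, 0; split; [apply: Bi0|rewrite tofrac0 mul0r]. Qed.
Lemma Rr_1 : Rr 1.
Proof.
apply/RrE; exists 0%N, 1; split; first by rewrite mulr0; apply: Hd1.
by rewrite tofrac1 expr0 divr1.
Qed.
Lemma Rr_X y n : Rr y -> Rr (y ^+ n).
Proof. by move=> h; elim: n => [|n IH]; [rewrite expr0; apply: Rr_1|rewrite exprS; apply: Rr_mul]. Qed.
Lemma Rr_sum (I : Type) (s : seq I) (P : pred I) (G0 : I -> F) :
  (forall i, P i -> Rr (G0 i)) -> Rr (\sum_(i <- s | P i) G0 i).
Proof. by move=> h; apply: (big_ind Rr) => //; [apply: Rr_0|apply: Rr_add]. Qed.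

Lemma Aa_0 : Aa 0.
Proof.
exists 0, 0%N, 1%N; split => //; first exact: Kh0.
by rewrite tofrac0 mul0r.
Qed.
Lemma Aa_1 : Aa 1.
Proof.
exists 1, 0%N, 1%N; split => //; first by rewrite mulr0; apply: Kh1.
by rewrite expr0 mulr1n tofrac1 divr1.
Qed.

Lemma Aa_sub y1 y2 : Aa y1 -> Aa y2 -> Aa (y1 - y2).
Proof.
move=> [c1 [L1 [N1 [N10 h1 ->]]]] [c2 [L2 [N2 [N20 h2 ->]]]].
exists (c1 * (f ^+ L2 *+ N2) - c2 * (f ^+ L1 *+ N1)), (L1 + L2)%N, (N1 * N2)%N; split.
- by rewrite muln_gt0 N10.
- apply: KhB.
    by apply: (@Kh_eq (dz * L1%:Z + dz * L2%:Z)); [rewrite PoszD; ring|apply: KhM => //; apply: KhMn; apply: KhfX].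
  by apply: (@Kh_eq (dz * L2%:Z + dz * L1%:Z)); [rewrite PoszD; ring|apply: KhM => //; apply: KhMn; apply: KhfX].
- have eD : f ^+ (L1 + L2) *+ (N1 * N2) = (f ^+ L1 *+ N1) * (f ^+ L2 *+ N2).
    by rewrite exprD mulrnA -mulrnAl -mulrnAr.
  rewrite eD tofracB !tofracM; apply: G4; apply: toF_neq0; exact: den_neq0.
Qed.

Lemma Aa_mul y1 y2 : Aa y1 -> Aa y2 -> Aa (y1 * y2).
Proof.
move=> [c1 [L1 [N1 [N10 h1 ->]]]] [c2 [L2 [N2 [N20 h2 ->]]]].
exists (c1 * c2), (L1 + L2)%N, (N1 * N2)%N; split.
- by rewrite muln_gt0 N10.
- by apply: (@Kh_eq (dz * L1%:Z + dz * L2%:Z)); [rewrite PoszD; ring|apply: KhM].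
- have eD : f ^+ (L1 + L2) *+ (N1 * N2) = (f ^+ L1 *+ N1) * (f ^+ L2 *+ N2).
    by rewrite exprD mulrnA -mulrnAl -mulrnAr.
  rewrite eD !tofracM; exact: G3.
Qed.

Lemma Aa_add y1 y2 : Aa y1 -> Aa y2 -> Aa (y1 + y2).
Proof.
move=> h1 h2; rewrite -[y2]opprK -[- y2]sub0r.
by apply: Aa_sub => //; apply: Aa_sub => //; apply: Aa_0.
Qed.

Hypothesis hLN : forall b z, b \in Hd z -> exists q, iter q D b = 0.
Variables (m P0 : nat) (V Vb : B) (Vz Vbz : int).
Hypothesis hm0 : (0 < m)%N.
Hypothesis hm : forall (k L : nat) c, c != 0 -> Kh (dz * L%:Z - rz * k%:Z) c -> (m %| k)%N.
Hypothesis hV : Kh Vz V.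
Hypothesis hVb : Kh Vbz Vb.
Hypothesis hVV : V * Vb = f ^+ 2.
Hypothesis hdeg1 : rz * m%:Z + P0%:Z * Vz = P0%:Z * dz.
Hypothesis hdeg2 : Vz + Vbz = dz + dz.

Lemma e2 : Vbz * P0%:Z = P0%:Z * dz + rz * m%:Z.
Proof.
have -> : Vbz = dz + dz - Vz by rewrite -hdeg2 addrC addKr.
have -> : rz * m%:Z = P0%:Z * dz - P0%:Z * Vz by rewrite -hdeg1 addrK.
ring.
Qed.

Lemma V_neq0 : V != 0.
Proof. by apply/negP => /eqP h; move: hVV; rewrite h mul0r => /esym/eqP; rewrite expf_eq0 /= (negbTE f_neq0). Qed.

Definition tt := toF (r ^+ m * V ^+ P0) / toF (f ^+ P0).

Lemma Rr_t : Rr tt.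
Proof.
apply/RrE; exists P0, (r ^+ m * V ^+ P0); split; last by rewrite /tt tofracXn.
apply: (@Hd_eq (rz * m%:Z + Vz * P0%:Z)); first by rewrite [Vz * _]mulrC hdeg1 mulrC.
by apply: HdM; apply: HdX => //; case: hV.
Qed.

Definition AT (y : F) := exists p : {poly F}, (forall k, Aa p`_k) /\ y = p.[tt].

Lemma AT_0 : AT 0.
Proof. by exists 0; split; [move=> k; rewrite coef0; apply: Aa_0|rewrite horner0]. Qed.
Lemma AT_add y1 y2 : AT y1 -> AT y2 -> AT (y1 + y2).
Proof.
move=> [p1 [h1 ->]] [p2 [h2 ->]]; exists (p1 + p2); split; last by rewrite hornerD.
by move=> k; rewrite coefD; apply: Aa_add.
Qed.
Lemma AT_sum (I : Type) (s : seq I) (P : pred I) (G0 : I -> F) :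
  (forall i, P i -> AT (G0 i)) -> AT (\sum_(i <- s | P i) G0 i).
Proof. by move=> h; apply: (big_ind AT) => //; [apply: AT_0|apply: AT_add]. Qed.
Lemma AT_term a l : Aa a -> AT (a * tt ^+ l).
Proof.
move=> ha; exists (a%:P * 'X^l); split; last by rewrite hornerCM hornerXn.
move=> k; rewrite coefCM coefXn; case: (k == l); rewrite ?mulr1 ?mulr0 //; exact: Aa_0.
Qed.

Lemma Rr_AT y : Rr y -> AT y.
Proof.
move=> /RrE [n [b [hb ->]]]; have [q hq] := hLN hb.
have [N [L [P [N0 hP hNP]]]] := expand hb hq.
pose Den := toF (f ^+ (n + L) *+ N).
have hDen : Den != 0 by apply: toF_neq0; apply: den_neq0.
have -> : toF b / toF f ^+ n = \sum_(k < size P) toF (P`_k * r ^+ k) / Den.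
  rewrite -mulr_suml.
  have -> : \sum_(k < size P) toF (P`_k * r ^+ k) = toF (P.[r]).
    by rewrite horner_coef rmorph_sum.
  rewrite -hNP /Den.
  have e1 : (f ^+ L * b) *+ N = b * (f ^+ L *+ N) by rewrite -mulrnAl mulrC.
  have e2 : f ^+ (n + L) *+ N = f ^+ n * (f ^+ L *+ N) by rewrite exprD mulrnAr.
  rewrite e1 e2 !tofracM tofracXn; apply: G5; apply: toF_neq0; exact: den_neq0.
apply: AT_sum => k _.
have hc : Kh (dz * (n + L)%:Z - rz * k%:Z) P`_k.
  by have := hP k; apply: Kh_eq; rewrite PoszD; ring.
case: (eqVneq P`_k 0) => [->|nc]; first by rewrite mul0r tofrac0 mul0r; apply: AT_0.
have /dvdnP [l el] := hm nc hc.
have -> : toF (P`_k * r ^+ k) / Den =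
   (toF (P`_k * Vb ^+ (P0 * l)) / toF (f ^+ (n + L + P0 * l) *+ N)) * tt ^+ l.
  have el' : (k : nat) = (m * l)%N by rewrite el mulnC.
  have eD : f ^+ (n + L + P0 * l) *+ N = (f ^+ (n + L) *+ N) * f ^+ (P0 * l).
    by rewrite exprD mulrnAl.
  have hXY : toF (V ^+ (P0 * l)) * toF (Vb ^+ (P0 * l)) =
             toF (f ^+ (P0 * l)) * toF (f ^+ (P0 * l)).
    rewrite -!tofracM -exprMn hVV -exprM -exprD; congr (toF (f ^+ _)).
    by rewrite mul2n addnn.
  rewrite /Den /tt el' eD expr_div_n -!tofracXn exprMn -!exprM !tofracM.
  apply: G6; [exact: toF_neq0 (den_neq0 _ N0)|exact: toF_neq0 (expf_neq0 _ f_neq0)|exact: hXY].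
apply: AT_term; exists (P`_k * Vb ^+ (P0 * l)), (n + L + P0 * l)%N, N; split => //.
apply: (@Kh_eq (dz * (n + L)%:Z - rz * k%:Z + Vbz * (P0 * l)%:Z)); last first.
  by apply: KhM => //; apply: KhX.
rewrite el !PoszD !PoszM.
transitivity (dz * (n%:Z + L%:Z) - rz * (l%:Z * m%:Z) + (Vbz * P0%:Z) * l%:Z); first ring.
rewrite e2; ring.
Qed.

Lemma AT_Rr y : AT y -> Rr y.
Proof.
move=> [p [hp ->]]; rewrite horner_coef; apply: Rr_sum => i _.
by apply: Rr_mul; [apply: Aa_Rr|apply: Rr_X; apply: Rr_t].
Qed.

Lemma common_den (p : {poly F}) : (forall k, Aa p`_k) -> forall n,
  exists N L (Qf : nat -> B), [/\ (0 < N)%N, forall k, Kh (dz * L%:Z) (Qf k) &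
    forall k, (k < n)%N -> p`_k * toF (f ^+ L *+ N) = toF (Qf k)].
Proof.
move=> hp; elim=> [|n [N [L [Qf [N0 hQf hE]]]]].
  by exists 1%N, 0%N, (fun _ => 0); split => // k; apply: Kh0.
have [c [L' [N' [N0' hc hpn]]]] := hp n.
exists (N * N')%N, (L + L')%N,
  (fun k => if (k < n)%N then Qf k * (f ^+ L' *+ N') else c * (f ^+ L *+ N)); split.
- by rewrite muln_gt0 N0.
- move=> k; case: ifP => _.
    apply: (@Kh_eq (dz * L%:Z + dz * L'%:Z)); first by rewrite PoszD; ring.
    by apply: KhM => //; apply: KhMn; apply: KhfX.
  apply: (@Kh_eq (dz * L'%:Z + dz * L%:Z)); first by rewrite PoszD; ring.
  by apply: KhM => //; apply: KhMn; apply: KhfX.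
- have eD : f ^+ (L + L') *+ (N * N') = (f ^+ L *+ N) * (f ^+ L' *+ N').
    by rewrite exprD mulrnA -mulrnAl -mulrnAr.
  move=> k; rewrite ltnS leq_eqVlt; case/orP => [/eqP ->|kn].
    rewrite ltnn hpn eD !tofracM; apply: G7; apply: toF_neq0; exact: den_neq0.
  by rewrite kn eD !tofracM mulrA hE.
Qed.

Lemma transc_t (p : {poly F}) : (forall k, Aa p`_k) -> p.[tt] = 0 -> p = 0.
Proof.
move=> hp hp0.
set s := size p.
have [N [L [Qf [N0 hQf hE]]]] := common_den hp s.
pose Den := toF (f ^+ L *+ N).
have hDen : Den != 0 by apply: toF_neq0; apply: den_neq0.
pose c k := Qf k * V ^+ (P0 * k) * f ^+ (P0 * (s - k)).
have hsum : \sum_(k < s) c k * r ^+ (m * k) = 0.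
  apply/eqP; rewrite -tofrac_eq0; apply/eqP.
  have : p.[tt] * Den * toF f ^+ (P0 * s) = 0 by rewrite hp0 !mul0r.
  rewrite horner_coef !mulr_suml (big_morph toF (@tofracD B) (@tofrac0 B)) => h; rewrite -[in RHS]h.
  apply: eq_bigr => [[k ks]] _ /=.
  rewrite /Den [p`_k * _ * toF _]mulrAC hE //.
  have es : f ^+ (P0 * s) = f ^+ (P0 * k) * f ^+ (P0 * (s - k)).
    by rewrite -exprD -mulnDr subnKC // ltnW.
  rewrite /c /tt expr_div_n -!tofracXn exprMn -!exprM es !tofracM.
  by apply: G8; apply: toF_neq0; apply: expf_neq0; exact: f_neq0.
pose Q3 := \sum_(k < s) c k *: 'X^(m * k).
have hQ3 : HomPoly (dz * (L + P0 * s)%:Z) Q3.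
  move=> j; rewrite /Q3 coef_sum; apply: Kh_sum => [[k ks]] _ /=.
  rewrite coefZ coefXn; case: (eqVneq j (m * k)%N) => [->|nj]; last first.
    by rewrite mulr0; apply: Kh0.
  rewrite mulr1 /c.
  apply: (@Kh_eq (dz * L%:Z + Vz * (P0 * k)%:Z + dz * (P0 * (s - k))%:Z)).
    have -> : s = (k + (s - k))%N by rewrite subnKC // ltnW.
    rewrite addKn !PoszD !PoszM.
    transitivity (dz * L%:Z + k%:Z * (P0%:Z * Vz) + dz * (P0%:Z * (s - k)%:Z)); first ring.
    have -> : P0%:Z * Vz = P0%:Z * dz - rz * m%:Z by rewrite -hdeg1 [rz * _ + _]addrC addrK.
    ring.
  apply: KhM; first apply: KhM => //; last by apply: KhfX.
  by apply: KhX.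
have Q30 : Q3 = 0.
  apply: (transc hQ3).
  rewrite /Q3 horner_sum -[RHS]hsum; apply: eq_bigr => k _.
  by rewrite hornerZ hornerXn.
apply/polyP => k; rewrite coef0.
case: (ltnP k s) => ks; last by rewrite nth_default.
have hck : c k = 0.
  have := congr1 (fun q : {poly B} => q`_(m * k)) Q30; rewrite /= coef0 /Q3 coef_sum.
  rewrite (bigD1 (Ordinal ks)) //= coefZ coefXn eqxx mulr1 big1 ?addr0 // => j nj.
  rewrite coefZ coefXn eqn_pmul2l // eq_sym.
  have -> : (nat_of_ord j == k) = false.
    by apply/negbTE; apply: contra nj => /eqP e; apply/eqP/val_inj.
  by rewrite mulr0.
have hQk : Qf k = 0.
  move: hck; rewrite /c => /eqP; rewrite !mulf_eq0 !expf_eq0 (negbTE f_neq0) (negbTE V_neq0).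
  by rewrite !andbF !orbF => /eqP.
have := hE k ks; rewrite hQk tofrac0 => /eqP; rewrite mulf_eq0 (negbTE hDen) orbF.
by move/eqP.
Qed.

Hypothesis hdz : dz != 0.

Lemma cyl : cylindrical Bi f.
Proof.
split; first exact: f_neq0.
exists (d *~ dz); split.
- by case: Khf.
- move=> n n0; apply/eqP => h.
  have : d *~ (dz * n%:Z) = d *~ 0 by rewrite mulrzA; exact: h.
  move/dz_inj/eqP; rewrite mulf_eq0 (negbTE hdz) /=.
  by move=> /eqP [e]; rewrite e in n0.
- exists Aa, tt; split.
  + by split; [apply: Aa_Rr|split; [apply: Aa_0|apply: Aa_1]].
  + exact: Aa_sub.
  + by split; [apply: Aa_mul|apply: Rr_t].
  + by move=> y; split; [apply: Rr_AT|apply: AT_Rr].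
  + exact: transc_t.
Qed.
End Main.

Section Fin.
Variables (G : zmodType) (B : idomainType) (Bi : G -> pred B) (d : G) (D : B -> B).
Hypothesis hgr : is_grading Bi.
Hypothesis hQ : contains_Q B.
Hypothesis hinf : infinite_order d.
Hypothesis hder : derivation_on (Veronese Bi d) D.

Local Notation Kh := (@Kh G B Bi d D).
Local Notation Hd := (@Hd G B Bi d).

Lemma Dsum_ver (s : seq G) (c : G -> B) : (forall i, i \in s -> in_cyclic d i) ->
  (forall i, c i \in Bi i) -> D (\sum_(i <- s) c i) = \sum_(i <- s) D (c i).
Proof.
elim: s => [|a s IH] hs hc; first by rewrite !big_nil (D0 hgr hder).
rewrite !big_cons; case: hder => _ Hadd _.
rewrite Hadd ?IH //.
- by move=> i iS; apply: hs; rewrite inE iS orbT.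
- have [z hz] := hs a (mem_head _ _); apply: (HdS hgr (z := z)); rewrite /Hd -hz; exact: hc.
- by exists s, c; split; [move=> i iS; apply: hs; rewrite inE iS orbT|split].
Qed.


Lemma main_fin :
  homogeneous_der Bi d D ->
  locally_nilpotent_on (Veronese Bi d) D ->
  (exists x, Veronese Bi d x /\ D x != 0) ->
  (exists x, [/\ Veronese Bi d x, D x = 0 & x \notin Bi 0]) ->
  exists f : B,
    [/\ (exists g, Veronese Bi d g /\ f = D g), D f = 0 & cylindrical Bi f].
Proof.
move=> [e he] hln [x [[s [c [hs [hc hx]]]] Dx]] [y [[s' [c' [hs' [hc' hy]]]] Dy ny]].
have [i0 [i0s Di0]] : exists i, i \in s /\ D (c i) != 0.
  apply: NNPP => hn; move: Dx; rewrite hx (Dsum_ver hs hc) big_seq big1 ?eqxx //.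
  move=> i iS; apply/eqP; apply: NNPP => hi; apply: hn; exists i; split => //; exact/negP.
have [z0 ez0] := hs i0 i0s.
set x0 := c i0.
have hx0 : x0 \in Hd z0 by rewrite /Hd -ez0; apply: hc.
have Sx0 : Veronese Bi d x0 := HdS hgr hx0.
have hDx0 : D x0 \in Bi (i0 + e) by apply: he; [exists z0|exact: hc].
have SDx0 : Veronese Bi d (D x0) by case: hder => H _ _; apply: H.
have [w ew] := L1 hgr hQ SDx0 hDx0 Di0.
pose ez := w - z0.
have eez : e = d *~ ez by rewrite /ez mulrzBr -ew -ez0 addrC addKr.
have hhom : forall z x, x \in Hd z -> D x \in Hd (z + ez).
  move=> z u hu; rewrite /Hd mulrzDr -eez; apply: he => //; by exists z.
have hLN : forall b z, b \in Hd z -> exists q, iter q D b = 0.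
  by move=> b z hb; apply: hln; apply: HdS hb.

have D0' := D0 hgr hder.
have iterHd : forall k u z, u \in Hd z -> iter k D u \in Hd (z + ez * k%:Z).
  elim=> [|k IH] u z hu; first by rewrite mulr0 addr0.
  rewrite iterS; apply: (Hd_eq (z1 := z + ez * k%:Z + ez)); last by apply: hhom; apply: IH.
  by rewrite -addn1 PoszD; ring.
have [n0 [n00 hn0 hmin]] : exists n, [/\ (0 < n)%N, iter n D x0 = 0 &
    forall k, (0 < k < n)%N -> ~ iter k D x0 = 0].
  apply: ex_minP; have [q hq] := hLN _ _ hx0; exists q.+1; split => //.
  by rewrite iterS hq D0'.
have [k ek] : exists k, n0 = k.+2.
  case: n0 n00 hn0 hmin => [|[|k]] // _ h1; first by rewrite /= in h1; rewrite h1 eqxx in Di0.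
  by exists k.
subst n0.
set r0 := iter k D x0.
have hr0 : r0 \in Hd (z0 + ez * k%:Z) := iterHd k x0 z0 hx0.
have Dr0 : D r0 != 0 by apply/eqP; apply: (hmin k.+1) => //=.
have DDr0 : D (D r0) = 0 by [].
set rz0 := z0 + ez * k%:Z.
have Kf0 : Kh (rz0 + ez) (D r0) by split => //; apply: hhom.
have Dc' : forall i, i \in s' -> D (c' i) = 0.
  have hF : forall j, j \in map (fun i => i + e) s' -> D (c' (j - e)) \in Bi j.
    move=> j /mapP [i iS ->]; rewrite addrK; apply: he; [exact: hs'|exact: hc'].
  have hsum : \sum_(j <- map (fun i => i + e) s') D (c' (j - e)) = 0.
    by rewrite big_map; under eq_bigr do rewrite addrK; rewrite -(Dsum_ver hs' hc') -hy.
  move=> i iS; have := L0 hgr hQ hF hsum (i := i + e); rewrite addrK; apply.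
  by apply/mapP; exists i.
have [i1 [i1s i10 ci1]] : exists i, [/\ i \in s', i != 0 & c' i != 0].
  apply: NNPP => hn; move: ny; rewrite hy big_seq; apply/negP/negPn; apply: (Bi_sum hgr) => i iS.
  case: (eqVneq i 0) => [->|ni]; first exact: hc'.
  case: (eqVneq (c' i) 0) => [->|nc]; first exact: (Bi0 hgr).
  by exfalso; apply: hn; exists i.
have [zh ezh] := hs' i1 i1s.
set h := c' i1.
have Kh_h : Kh zh h by split; [rewrite /Hd -ezh; exact: hc'|exact: Dc'].
have zh0 : zh != 0 by apply/eqP => e0; move: i10; rewrite ezh e0 mulr0z eqxx.

(* Step E : the group of kernel degrees *)
pose PG := fun n : nat => exists a b za zb,
  [/\ a != 0, b != 0, Kh za a, Kh zb b & n%:Z = za - zb].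
have Kh1' : Kh 0 1 := Kh1 hgr hder.
have hex : exists n, (0 < n)%N /\ PG n.
  exists `|zh|%N; split; first by rewrite absz_gt0.
  case: (ltrgtP zh 0) => hz.
  - exists 1, h, 0, zh; split => //; first exact: oner_neq0.
    by rewrite ltz0_abs // sub0r.
  - exists h, 1, zh, 0; split => //; first exact: oner_neq0.
    by rewrite gez0_abs ?subr0 // ltW.
  - by rewrite hz eqxx in zh0.
have [g [g0 [a [b [za [zb [a0 b0 Ka Kb eg]]]]] gmin]] := ex_minP hex.
have gz0 : (g%:Z != 0) by rewrite eqz_nat -lt0n.
have Hg : forall cc z, cc != 0 -> Kh z cc -> (g%:Z %| z)%Z.
  move=> cc z c0 Kc; apply/dvdz_mod0P.
  set q := (z %/ g)%Z; set rm := (z %% g)%Z.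
  have ge : z = q * g%:Z + rm := divz_eq z g.
  have rm0 : 0 <= rm := modz_ge0 z gz0.
  have rmg : rm < g%:Z by apply: ltz_pmod; rewrite ltz_nat.
  have erm : rm = z - q * g%:Z by rewrite [in RHS]ge addrAC subrr add0r.
  apply: NNPP => hne.
  have en : (`|rm|%N)%:Z = rm := gez0_abs rm0.
  apply: (gmin `|rm|%N).
    rewrite absz_gt0; apply/andP; split; first by apply/eqP.
    by rewrite -ltz_nat en.
  have [q0|q0] := boolP (0 <= q).
    have eq : (`|q|%N)%:Z = q := gez0_abs q0.
    exists (cc * b ^+ `|q|), (a ^+ `|q|), (z + zb * `|q|%N%:Z), (za * `|q|%N%:Z); split.
    - by rewrite mulf_neq0 // expf_neq0.
    - by rewrite expf_neq0.
    - exact: (KhM hgr hder Kc (KhX hgr hder _ Kb)).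
    - exact: (KhX hgr hder _ Ka).
    - by rewrite en erm -eq eg; ring.
  have eq : (`|q|%N)%:Z = - q by rewrite ltz0_abs // ltNge.
  exists (cc * a ^+ `|q|), (b ^+ `|q|), (z + za * `|q|%N%:Z), (zb * `|q|%N%:Z); split.
  - by rewrite mulf_neq0 // expf_neq0.
  - by rewrite expf_neq0.
  - exact: (KhM hgr hder Kc (KhX hgr hder _ Ka)).
  - exact: (KhX hgr hder _ Kb).
  - by rewrite en erm eg -[X in X * (za - zb)]opprK -eq; ring.

have [hh [zhh [Khh hh0 hdz0]]] : exists hh zhh,
    [/\ Kh zhh hh, hh != 0 & rz0 + ez + za + zb + zhh != 0].
  case: (eqVneq (rz0 + ez + za + zb) 0) => e0.
    by exists h, zh; split => //; rewrite e0 add0r.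
  by exists 1, 0; split => //; [exact: oner_neq0|rewrite addr0].
set K := a * b * hh.
have KK : Kh (za + zb + zhh) K := KhM hgr hder (KhM hgr hder Ka Kb) Khh.
have K0 : K != 0 by rewrite /K !mulf_neq0.
set r := r0 * K.
set rz := rz0 + (za + zb + zhh).
have hr : r \in Hd rz := HdM hgr hr0 (proj1 KK).
have eDr : D r = D r0 * K by rewrite (DM hgr hder hr0 (proj1 KK)) (proj2 KK) mulr0 add0r.
have Dr : D r != 0 by rewrite eDr mulf_neq0.
have DDr : D (D r) = 0.
  by rewrite eDr (DM hgr hder (proj1 Kf0) (proj1 KK)) (proj2 KK) DDr0 mulr0 mul0r addr0.
have hdz : rz + ez != 0.
  by move: hdz0; rewrite /rz; congr (~~ (_ == 0)); ring.
have Kf : Kh (rz + ez) (D r) by split => //; apply: hhom.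
have Hgdz : (g%:Z %| rz + ez)%Z := Hg _ _ Dr Kf.
have hexm : exists n, (0 < n)%N /\ (g%:Z %| rz * n%:Z)%Z.
  by exists g; split => //; apply: dvdz_mull; apply: dvdzz.
have [m [m0 hmd mmin]] := ex_minP hexm.
have hm : forall (kk L : nat) cc, cc != 0 -> Kh ((rz + ez) * L%:Z - rz * kk%:Z) cc -> (m %| kk)%N.
  move=> kk L cc c0 Kc.
  have /dvdzP [q1 e1] := Hg _ _ c0 Kc.
  have /dvdzP [q2 e2] : (g%:Z %| (rz + ez) * L%:Z)%Z by apply: dvdz_mulr.
  have /dvdzP [q3 e3] : (g%:Z %| rz * kk%:Z)%Z.
    apply/dvdzP; exists (q2 - q1); rewrite mulrBl -e1 -e2; ring.
  have /dvdzP [q4 e4] := hmd.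
  set n := (kk %% m)%N.
  have ekk : kk%:Z = (kk %/ m)%N%:Z * m%:Z + n%:Z by rewrite -PoszM -PoszD -divn_eq.
  case: (posnP n) => hnz; last first.
    exfalso; apply: (mmin n); first by rewrite hnz ltn_pmod.
    apply/dvdzP; exists (q3 - q4 * (kk %/ m)%N%:Z).
    transitivity (q3 * g%:Z - (q4 * g%:Z) * (kk %/ m)%N%:Z); last by ring.
    by rewrite -e3 -e4 ekk; ring.
  by apply/dvdnP; exists (kk %/ m)%N; rewrite {1}(divn_eq kk m) -/n hnz addn0.
have /dvdzP [ww eww] := hmd.
set f0 := D r0.
have Ka' : Kh (rz0 + ez + zb + zhh) (f0 * b * hh) := KhM hgr hder (KhM hgr hder Kf0 Kb) Khh.
have Kb' : Kh (rz0 + ez + za + zhh) (f0 * a * hh) := KhM hgr hder (KhM hgr hder Kf0 Ka) Khh.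
have [P0 [V [Vb [Vz [Vbz [hV hVb hVV hd1 hd2]]]]]] : exists P0 V Vb Vz Vbz,
    [/\ Kh Vz V, Kh Vbz Vb, V * Vb = (D r) ^+ 2,
        rz * m%:Z + P0%:Z * Vz = P0%:Z * (rz + ez) & Vz + Vbz = (rz + ez) + (rz + ez)].
  have [w0|w0] := boolP (0 <= ww).
    have ew' : (`|ww|%N)%:Z = ww := gez0_abs w0.
    exists `|ww|%N, (b * (f0 * b * hh)), (a * (f0 * a * hh)),
      (zb + (rz0 + ez + zb + zhh)), (za + (rz0 + ez + za + zhh)); split.
    - have := KhM hgr hder Kb Ka'. move=> hh'. exact hh'.
    - exact (KhM hgr hder Ka Kb').
    - by rewrite eDr /K /f0; ring.
    - by rewrite eww ew' eg /rz; ring.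
    - by rewrite /rz; ring.
  have ew' : (`|ww|%N)%:Z = - ww by rewrite ltz0_abs // ltNge.
  exists `|ww|%N, (a * (f0 * a * hh)), (b * (f0 * b * hh)),
    (za + (rz0 + ez + za + zhh)), (zb + (rz0 + ez + zb + zhh)); split.
  - exact (KhM hgr hder Ka Kb').
  - exact (KhM hgr hder Kb Ka').
  - by rewrite eDr /K /f0; ring.
  - by rewrite eww ew' eg /rz; ring.
  - by rewrite /rz; ring.
exists (D r); split.
- by exists r; split => //; exact (HdS hgr hr).
- exact: DDr.
- exact: (cyl hgr hQ hinf hder hhom hr DDr Dr hLN m0 hm hV hVb hVV hd1 hd2 hdz).
Qed.
End Fin.

Unset Implicit Arguments.

Theorem corollary4p5 (G : zmodType) (B : idomainType) (Bi : G -> pred B)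
  (d : G) (D : B -> B) :
  is_grading Bi -> contains_Q B -> infinite_order d ->
  derivation_on (Veronese Bi d) D ->
  homogeneous_der Bi d D ->
  locally_nilpotent_on (Veronese Bi d) D ->
  (exists x, Veronese Bi d x /\ D x != 0) ->
  (exists x, [/\ Veronese Bi d x, D x = 0 & x \notin Bi 0]) ->
  exists f : B,
    [/\ (exists g, Veronese Bi d g /\ f = D g), D f = 0 & cylindrical Bi f].
Proof.
move=> h1 h2 h3 h4; exact: (main_fin h1 h2 h3 h4).
Qed.
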